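(* Let $c\in[0,1]$. There exists a countable collection of languages $\mathcal{L}$ such that no set-based generator can generate in the limit from $\mathcal{L}$ and achieve set-based upper density at least $1-c+\varepsilon$, for any $\varepsilon>0$, under adversaries that use an enumeration without noise and with $c$-omissions.
   Context: The universe is $U=\mathbb{N}$ with its natural order. A language is an infinite subset of $U$; a collection is a countable family of languages. For $A,B\subseteq\mathbb{N}$ with $B=\{b_1<b_2<\cdots\}$, $\mu_{\rm up}(A,B)=\limsup_n\frac1n|A\cap\{b_1,\dots,b_n\}|$ and $\mu_{\rm low}(A,B)=\liminf_n\frac1n|A\cap\{b_1,\dots,b_n\}|$. An enumeration of a set $L$ (without noise or omissions) is a sequence in which every element of $L$ appears exactly once and no other elements appear; $S_n=\{x_1,\dots,x_n\}$. An enumeration of $K$ without noise and with $c$-omissions is an enumeration of some $\hat K\subseteq K$ with $\mu_{\rm low}(\hat K,K)\ge1-c$. A set-based generator is a sequence of maps that, given $x_1,\dots,x_n$ (and knowledge of $\mathcal{L}$, not of $K$), outputs $A_n\subseteq U\setminus S_n$. It generates in the limit if for every $K\in\mathcal{L}$ and admissible enumeration of $K$ there is $n^\star$ with $A_n\subseteq K$ for $n\ge n^\star$; it achieves set-based upper density $\rho$ if $\limsup_n\mu_{\rm low}(A_n,K)\ge\rho$ for every such $K$ and enumeration. *)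

(* Defs.v *)
From HB Require Import structures.
From mathcomp Require Import all_boot all_order all_algebra.
From mathcomp Require Import all_classical all_reals.
From mathcomp Require Import topology normedtype sequences.
Set Implicit Arguments. Unset Strict Implicit. Unset Printing Implicit Defensive.
Import Order.TTheory GRing.Theory Num.Theory.
Local Open Scope classical_set_scope.
Local Open Scope ring_scope.

(* Universe U = nat. Sets are classical sets [set nat]. *)

Definition count_below (B : set nat) (x : nat) : nat :=
  (\sum_(0 <= y < x) ((y \in B) : nat))%N.

(* the i-th (0-based) element of B in increasing order, i.e. b_{i+1}
   when B = {b_1 < b_2 < ...} is infinite *)
Definition bnth (B : set nat) (i : nat) : nat :=
  xget 0%N [set x | B x /\ count_below B x = i].

Definition count_prefix (A B : set nat) (n : nat) : nat :=
  (\sum_(0 <= i < n) ((bnth B i \in A) : nat))%N.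

(* mu_low(A,B) = liminf_n (1/n) |A ∩ {b_1,...,b_n}|   (n >= 1) *)
Definition mu_low {R : realType} (A B : set nat) : \bar R :=
  limn_einf (fun n : nat => ((count_prefix A B n.+1)%:R / (n.+1)%:R : R)%:E).

(* S_n = {x_1, ..., x_n}  (x is 0-indexed: x 0 = x_1) *)
Definition prefix (x : nat -> nat) (n : nat) : seq nat := [seq x i | i <- iota 0 n].

Definition enumeration_of (x : nat -> nat) (L : set nat) : Prop :=
  injective x /\ range x = L.

Definition enum_c_omissions {R : realType} (c : R) (x : nat -> nat) (K : set nat) : Prop :=
  exists Khat : set nat, Khat `<=` K /\ enumeration_of x Khat /\
    (((1 - c)%:E <= mu_low (R:=R) Khat K)%E).

Definition set_generator (G : seq nat -> set nat) : Prop :=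
  forall s : seq nat, forall y, G s y -> y \notin s.

Definition collection (L : nat -> set nat) : Prop :=
  forall i, infinite_set (L i).

Definition generates_in_limit {R : realType} (c : R) (L : nat -> set nat)
    (G : seq nat -> set nat) : Prop :=
  forall i (x : nat -> nat), enum_c_omissions c x (L i) ->
    exists nstar, forall n, (nstar <= n)%N -> G (prefix x n) `<=` L i.

Definition achieves_upper_density {R : realType} (c : R) (L : nat -> set nat)
    (G : seq nat -> set nat) (rho : R) : Prop :=
  forall i (x : nat -> nat), enum_c_omissions c x (L i) ->
    ((rho%:E <= limn_esup (fun n => mu_low (R:=R) (G (prefix x n)) (L i)))%E).

(* Main.v *)
Require Import Defs.
From mathcomp Require Import all_boot all_order all_algebra.
From mathcomp Require Import all_classical all_reals.
From mathcomp Require Import topology normedtype sequences.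
From mathcomp Require Import ereal zify ring lra.
Import Order.TTheory GRing.Theory Num.Theory.
Local Open Scope classical_set_scope.
Local Open Scope ring_scope.

Definition Dset (p q : nat) : set nat := [set n | (n %% q < p)%N].

Definition cnt (A : set nat) (n : nat) : nat :=
  (\sum_(0 <= i < n) ((i \in A) : nat))%N.

Lemma count_belowT x : count_below setT x = x.
Proof.
rewrite /count_below (eq_bigr (fun _ => 1%N)); last by move=> i _; rewrite in_setT.
by rewrite sum_nat_const_nat subn0 muln1.
Qed.

Lemma bnthT i : bnth setT i = i.
Proof.
rewrite /bnth; apply: xget_unique; first by split => //; rewrite count_belowT.
by move=> y [_]; rewrite count_belowT.
Qed.

Lemma count_prefixT A n : count_prefix A setT n = cnt A n.
Proof. by rewrite /count_prefix /cnt; apply: eq_bigr => i _; rewrite bnthT. Qed.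

Lemma cntS A n : cnt A n.+1 = (cnt A n + ((n \in A) : nat))%N.
Proof. by rewrite /cnt big_nat_recr. Qed.

Lemma cnt_sub A B n : A `<=` B -> (cnt A n <= cnt B n)%N.
Proof.
move=> AB; rewrite /cnt; apply: leq_sum => i _.
case: (boolP (i \in A)) => //= /set_mem /AB /mem_set ->.
by [].
Qed.

Lemma inD p q n : (n \in Dset p q) = (n %% q < p)%N.
Proof. by apply/idP/idP => [/set_mem|?]; [|apply/mem_set]. Qed.

Lemma cntD_closed p q m r : (0 < q)%N -> (p <= q)%N -> (r <= q)%N ->
  cnt (Dset p q) (m * q + r) = (m * p + minn r p)%N.
Proof.
move=> q0 pq; elim: m r => [|m IH] r.
  elim: r => [|r IHr] rq; first by rewrite mul0n add0n /cnt big_geq // min0n.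
  rewrite mul0n add0n in IHr *.
  rewrite cntS IHr ?(ltnW rq)// inD modn_small//.
  by case: (ltnP r p) => rp; lia.
elim: r => [|r IHr] rq.
  by rewrite addn0 mulSn addnC IH // ; lia.
rewrite addnS cntS IHr ?(ltnW rq)// inD modnMDl modn_small//.
by case: (ltnP r p) => rp; lia.
Qed.

Lemma cntD_mul p q m : (0 < q)%N -> (p <= q)%N ->
  cnt (Dset p q) (m * q) = (m * p)%N.
Proof. by move=> q0 pq; rewrite -[(m*q)%N]addn0 cntD_closed //; lia. Qed.

Lemma cntD_ge p q n : (0 < q)%N -> (p <= q)%N ->
  (p * n <= cnt (Dset p q) n * q)%N.
Proof.
move=> q0 pq; rewrite {1 2}(divn_eq n q) cntD_closed //; last exact: ltnW (ltn_pmod _ q0).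
have := ltn_pmod n q0; set r := (n %% q)%N; set m := (n %/ q)%N => rq.
case: (leqP r p) => rp; nia.
Qed.
Close Scope ereal_scope.

Definition xD (p q : nat) (m : nat) : nat := ((m %/ p) * q + m %% p)%N.

Lemma xD_mod p q m : (0 < p)%N -> (p <= q)%N -> (xD p q m %% q = m %% p)%N.
Proof.
move=> p0 pq; rewrite /xD modnMDl modn_small //.
have := ltn_pmod m p0; lia.
Qed.

Lemma xD_div p q m : (0 < p)%N -> (p <= q)%N -> (xD p q m %/ q = m %/ p)%N.
Proof.
move=> p0 pq; rewrite /xD divnMDl ?(leq_trans p0 pq) // (@divn_small (m %% p) q) ?addn0 //.
have := ltn_pmod m p0; lia.
Qed.

Lemma xD_enum p q : (0 < p)%N -> (p <= q)%N -> enumeration_of (xD p q) (Dset p q).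
Proof.
move=> p0 pq; split.
  move=> m1 m2 e.
  rewrite (divn_eq m1 p) (divn_eq m2 p) -!(@xD_div p q _ p0 pq) -!(@xD_mod p q _ p0 pq) e //.
apply/seteqP; split.
  move=> _ [m _ <-]; rewrite /Dset /= xD_mod //; exact: ltn_pmod.
move=> y; rewrite /Dset /= => yp.
exists ((y %/ q) * p + y %% q)%N => //.
have q0 : (0 < q)%N by exact: leq_trans p0 pq.
rewrite /xD divnMDl // (@divn_small (y %% q) p) // addn0 modnMDl modn_small //.
by rewrite -divn_eq.
Qed.

Lemma bnthD_in p q i : (0 < p)%N -> Dset p q (bnth (Dset p q) i).
Proof.
move=> p0; rewrite /bnth; case: xgetP => [x _ [] //|_].
by rewrite /Dset /= mod0n.
Qed.

Lemma count_prefixDD p q n : (0 < p)%N -> count_prefix (Dset p q) (Dset p q) n = n.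
Proof.
move=> p0; rewrite /count_prefix (eq_bigr (fun _ => 1%N)).
  by rewrite sum_nat_const_nat subn0 muln1.
by move=> i _; rewrite mem_set //; exact: bnthD_in.
Qed.

Lemma infiniteD p q : (0 < p)%N -> (0 < q)%N -> infinite_set (Dset p q).
Proof.
move=> p0 q0; apply/infiniteP/pcard_leP/injfunPex.
exists (fun m => (m * q)%N).
  by move=> m _; rewrite /Dset /= modnMl.
move=> m1 m2 _ _ /eqP; rewrite eqn_pmul2r // => /eqP //.
Qed.
Close Scope ereal_scope.


Lemma frac_le (R : realType) (a b c d : nat) : (0 < b)%N -> (0 < d)%N -> (a * d <= c * b)%N ->
  (a%:R / b%:R : R) <= c%:R / d%:R.
Proof.
move=> b0 d0 h; rewrite ler_pdivrMr ?ltr0n // mulrAC ler_pdivlMr ?ltr0n //.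
by rewrite -!natrM ler_nat.
Qed.

Open Scope ereal_scope.

Lemma liminf_ge_all (R : realType) (u : nat -> \bar R) l : (forall n, l <= u n) -> l <= limn_einf u.
Proof.
move=> h; rewrite limn_einf_lim; apply: lime_ge; first exact: is_cvg_einfs.
apply: nearW => n; apply: le_ereal_inf_tmp => _ [m _ <-]; exact: h.
Qed.

Lemma liminf_le_freq (R : realType) (u : nat -> \bar R) l :
  (forall N, exists2 n, (N <= n)%N & u n <= l) -> limn_einf u <= l.
Proof.
move=> h; rewrite limn_einf_lim; apply: lime_le; first exact: is_cvg_einfs.
apply: nearW => N; have [n Nn unl] := h N.
apply: le_trans unl; apply: ereal_inf_lbound; by exists n.
Qed.

Lemma limsup_le_ev (R : realType) (u : nat -> \bar R) l :
  (exists N, forall n, (N <= n)%N -> u n <= l) -> limn_esup u <= l.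
Proof.
move=> [N h]; rewrite limn_esup_lim; apply: lime_le; first exact: is_cvg_esups.
near=> M; apply: ge_ereal_sup => _ [m /= Mm <-]; apply: h.
apply: leq_trans Mm; near: M; by exists N.
Unshelve. all: by end_near.
Qed.

Close Scope ereal_scope.


Lemma choose_p (R : realType) (c : R) (q : nat) : 0 <= c -> c <= 1 -> (0 < q)%N ->
  exists p : nat, [/\ (0 < p)%N, (p <= q)%N, 1 - c <= p%:R / q%:R &
                      p%:R / q%:R <= 1 - c + q%:R^-1].
Proof.
move=> c0 c1 q0.
have q0R : (0 : R) < q%:R by rewrite ltr0n.
pose P := fun p : nat => (1 - c) * q%:R <= p%:R.
have exP : exists p, P p.
  by exists q; rewrite /P ler_piMl // ?ler0n //; lra.
pose p0 := ex_minn exP.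
have [Pp0 minp0] : P p0 /\ forall m, P m -> (p0 <= m)%N.
  by rewrite /p0; case: ex_minnP.
have p0q : (p0 <= q)%N by apply: minp0; rewrite /P ler_piMl // ?ler0n //; lra.
move: Pp0 minp0 p0q; case: p0 => [|p'] Pp minp pq.
  exists 1%N; split => //.
    rewrite ler_pdivlMr //; rewrite /P in Pp; lra.
  rewrite div1r; lra.
exists p'.+1; split => //.
  by rewrite ler_pdivlMr.
have np : p'%:R < (1 - c) * q%:R.
  by rewrite ltNge; apply/negP => /minp; rewrite ltnn.
rewrite ler_pdivrMr // mulrDl mulVf ?gt_eqF // -addn1 natrD; lra.
Qed.

Open Scope ereal_scope.

Lemma muD_ge (R : realType) p q : (0 < p)%N -> (p <= q)%N ->
  ((p%:R / q%:R : R)%:E <= mu_low (R:=R) (Dset p q) setT).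
Proof.
move=> p0 pq; have q0 : (0 < q)%N by exact: leq_trans p0 pq.
apply: liminf_ge_all => n; rewrite count_prefixT lee_fin; apply: frac_le => //.
exact: cntD_ge.
Qed.

Lemma muA_le (R : realType) A p q : (0 < p)%N -> (p <= q)%N -> A `<=` Dset p q ->
  mu_low (R:=R) A setT <= (p%:R / q%:R : R)%:E.
Proof.
move=> p0 pq AD; have q0 : (0 < q)%N by exact: leq_trans p0 pq.
apply: liminf_le_freq => N; exists (N.+1 * q)%N.-1.
  have : (N.+1 <= N.+1 * q)%N by rewrite leq_pmulr.
  lia.
have hpos : (0 < N.+1 * q)%N by rewrite muln_gt0.
rewrite prednK // count_prefixT lee_fin; apply: frac_le => //.
have := cnt_sub _ _ (N.+1 * q)%N AD; rewrite cntD_mul //; nia.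
Qed.

Lemma muDD (R : realType) (c : R) p q : (0 < p)%N -> (0 <= c)%R ->
  ((1 - c)%:E <= mu_low (R:=R) (Dset p q) (Dset p q)).
Proof.
move=> p0 c0; apply: liminf_ge_all => n; rewrite count_prefixDD // divff //.
rewrite lee_fin; lra.
Qed.

Close Scope ereal_scope.
Theorem theorem6p4 (R : realType) (c : R) (hc0 : 0 <= c) (hc1 : c <= 1) :
  exists L : nat -> set nat, collection L /\
    forall G : seq nat -> set nat, set_generator G ->
      forall eps : R, 0 < eps ->
        ~ (generates_in_limit c L G /\
           achieves_upper_density c L G (1 - c + eps)).
Proof.
pose pk (k : nat) : nat := sval (cid (@choose_p R c k.+1 hc0 hc1 (ltn0Sn k))).
have pkP k : [/\ (0 < pk k)%N, (pk k <= k.+1)%N, 1 - c <= (pk k)%:R / k.+1%:R &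
                      (pk k)%:R / k.+1%:R <= 1 - c + k.+1%:R^-1].
  exact: (svalP (cid (@choose_p R c k.+1 hc0 hc1 (ltn0Sn k)))).
exists (fun i => if i is k.+1 then Dset (pk k) k.+1 else setT); split.
  case => [|k]; first exact: infinite_nat.
  by have [p0 _ _ _] := pkP k; apply: infiniteD.
move=> G _ eps eps0 [gen dens].
pose k := Num.trunc eps^-1.
have hk : k.+1%:R^-1 < eps.
  have := truncnS_gt eps^-1; rewrite -/k => h.
  rewrite -(div1r (k.+1%:R)) ltr_pdivrMr ?ltr0n //.
  by rewrite -(div1r eps) ltr_pdivrMr // mulrC in h.
have [p0 pq lo hi] := pkP k.
set p := pk k in p0 pq lo hi.
pose x := xD p k.+1.
have ex1 : enum_c_omissions c x (Dset p k.+1).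
  exists (Dset p k.+1); split => //; split; first exact: xD_enum.
  exact: muDD.
have [nstar hn] := gen k.+1 x ex1.
have ex0 : enum_c_omissions c x setT.
  exists (Dset p k.+1); split => //; split; first exact: xD_enum.
  apply: le_trans (@muD_ge R _ _ p0 pq); by rewrite lee_fin.
have := dens 0%N x ex0.
have : (limn_esup (fun n => mu_low (R:=R) (G (Defs.prefix x n)) setT) <= ((p%:R / k.+1%:R)%R)%:E)%E.
  apply: limsup_le_ev; exists nstar => n /hn Gn.
  exact: muA_le.
move=> h1 h2; have := le_trans h2 h1; rewrite lee_fin => h3.
have h4 : p%:R / k.+1%:R < 1 - c + eps by apply: (le_lt_trans hi); rewrite ltrD2l.
by move: h4; rewrite ltNge h3.
Qed.
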